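(* Let $2<p<4$, $b>0$, assume (V), fix $k\in\mathbb{N}$ and $\mathbf{r}_k\in\Lambda_k$. Let $(u_1,\dots,u_{k+1})\in\mathbf{H}_k$ satisfy, for every $i=1,\dots,k+1$, $$(4-p)\int_{B_i}|u_i|^pdx<2\|u_i\|_i^2$$ and $$\|u_i\|_i^2+b\Big(\int_{B_i}|\nabla u_i|^2dx\Big)^2+b\int_{B_i}|\nabla u_i|^2dx\sum_{j\ne i}\int_{B_j}|\nabla u_j|^2dx\le\int_{B_i}|u_i|^pdx.$$ Then there exists a unique $(k+1)$-tuple $(\widehat t_1,\dots,\widehat t_{k+1})$ of positive numbers with $\widehat t_i\le1$ for all $i$ such that $(\widehat t_1u_1,\dots,\widehat t_{k+1}u_{k+1})\in N_k^-$. Moreover, $$E_b(\widehat t_1u_1,\dots,\widehat t_{k+1}u_{k+1})=\max_{0\le t_i\le1,\ i=1,\dots,k+1}E_b(t_1u_1,\dots,t_{k+1}u_{k+1}).$$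
   Context: Condition (V): $V$ is continuous, radial, and $\inf_{\mathbb{R}^3}V=V_0>0$. $\Lambda_k:=\{(r_1,\dots,r_k):0=:r_0<r_1<\dots<r_k<r_{k+1}:=\infty\}$; $B_i:=\{r_{i-1}<|x|<r_i\}\subset\mathbb{R}^3$. $\mathcal{H}_i$ is the space of radial $H^1_0(B_i)$ functions (extended by $0$ outside $B_i$) with norm $\|u\|_i^2=\int_{B_i}(|\nabla u|^2+V(|x|)u^2)dx$; $\mathbf{H}_k:=\mathcal{H}_1\times\dots\times\mathcal{H}_{k+1}$. $E_b(u_1,\dots,u_{k+1}):=\frac12\sum_i\|u_i\|_i^2+\frac b4\big(\sum_i\int_{B_i}|\nabla u_i|^2\big)^2-\frac1p\sum_i\int_{B_i}|u_i|^p$. $N_k^-$ is the set of $(u_1,\dots,u_{k+1})\in\mathbf{H}_k$ with, for all $i$: $u_i\ne0$, $\|u_i\|_i^2+b\big(\int_{B_i}|\nabla u_i|^2\big)^2+b\int_{B_i}|\nabla u_i|^2\sum_{j\ne i}\int_{B_j}|\nabla u_j|^2=\int_{B_i}|u_i|^p$, and $(4-p)\int_{B_i}|u_i|^p<2\|u_i\|_i^2$. *)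

(* Defs.v *)
From HB Require Import structures.
From mathcomp Require Import all_boot all_order all_algebra.
From mathcomp Require Import all_classical all_reals all_analysis.
Set Implicit Arguments. Unset Strict Implicit. Unset Printing Implicit Defensive.
Import Order.TTheory GRing.Theory Num.Theory.
Import numFieldNormedType.Exports.
Local Open Scope classical_set_scope.
Local Open Scope ring_scope.

Section Defs.
Variable R : realType.
Notation mu := (@lebesgue_measure R).

(* Radii r_1 < ... < r_k are r 1, ..., r k; r_0 = 0, r_{k+1} = +oo.
   Shells are indexed 0-based: shell i (0 <= i <= k) is B_{i+1}, described
   by the radial variable s = |x| : lo < s < hi. *)
Definition radii_ok (k : nat) (r : nat -> R) : Prop :=
  (0 < k)%N -> 0 < r 1%N /\ (forall j, (1 <= j)%N -> (j < k)%N -> r j < r j.+1).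

Definition lo (r : nat -> R) (i : nat) : R := if i is 0 then 0 else r i.

Definition shell (k : nat) (r : nat -> R) (i : nat) : set R :=
  [set s | lo r i < s /\ ((i < k)%N -> s < r i.+1)].

(* Radial element of H^1_0(B_i), given by its radial profile w
   (u(x) = w(|x|)) together with its (weak) derivative g
   (|grad u|(x) = |g(|x|)|); both extended by 0 outside the shell. *)
Definition radH (V : R -> R) (k : nat) (r : nat -> R) (i : nat)
    (w g : R -> R) : Prop :=
  [/\ (forall s, ~ shell k r i s -> w s = 0 /\ g s = 0),
      (forall s t, shell k r i s -> shell k r i t -> s <= t ->
         mu.-integrable `[s, t] (EFin \o g) /\
         w t - w s = Rintegral mu `[s, t] g),
      mu.-integrable (shell k r i)
        (fun s => ((g s ^+ 2 + V s * w s ^+ 2) * s ^+ 2)%:E),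
      ((0 < i)%N -> w s @[s --> (lo r i)^'+] --> 0) &
      ((i < k)%N -> w s @[s --> (r i.+1)^'-] --> 0)].

(* ||u||_i^2 = \int_{B_i} |grad u|^2 + V u^2 dx (polar coordinates) *)
Definition normsq (V : R -> R) k r i (w g : R -> R) : R :=
  4 * pi * Rintegral mu (shell k r i) (fun s => (g s ^+ 2 + V s * w s ^+ 2) * s ^+ 2).

Definition gradsq k r i (g : R -> R) : R :=
  4 * pi * Rintegral mu (shell k r i) (fun s => g s ^+ 2 * s ^+ 2).

Definition Lpp (p : R) k r i (w : R -> R) : R :=
  4 * pi * Rintegral mu (shell k r i) (fun s => (`|w s| `^ p) * s ^+ 2).

Definition Eb (V : R -> R) (b p : R) k r (w g : 'I_k.+1 -> R -> R) : R :=
  2^-1 * (\sum_(i < k.+1) normsq V k r i (w i) (g i))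
  + b / 4 * (\sum_(i < k.+1) gradsq k r i (g i)) ^+ 2
  - p^-1 * (\sum_(i < k.+1) Lpp p k r i (w i)).

Definition inNminus (V : R -> R) (b p : R) k r (w g : 'I_k.+1 -> R -> R) : Prop :=
  forall i : 'I_k.+1,
  [/\ radH V k r i (w i) (g i),
      exists s, w i s != 0,
      normsq V k r i (w i) (g i) + b * (gradsq k r i (g i)) ^+ 2
        + b * gradsq k r i (g i) * (\sum_(j < k.+1 | j != i) gradsq k r j (g j))
        = Lpp p k r i (w i) &
      (4 - p) * Lpp p k r i (w i) < 2 * normsq V k r i (w i) (g i)].

End Defs.

(* Main.v *)
Require Import Defs.
From HB Require Import structures.
From mathcomp Require Import all_boot all_order all_algebra.
From mathcomp Require Import all_classical all_reals all_analysis.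
From mathcomp Require Import ring lra.
From mathcomp Require Import measurable_realfun.
Import Order.TTheory GRing.Theory Num.Theory.
Import numFieldNormedType.Exports.
Local Open Scope classical_set_scope.
Local Open Scope ring_scope.
Ltac isArith T := lazymatch T with is_true _ => idtac | _ = _ => idtac end.
Ltac clear_foralls := repeat match goal with H : ?T |- _ =>
  lazymatch type of T with Prop => tryif isArith T then fail else clear H end end.
Ltac clear_vars := repeat match goal with x : ?T |- _ =>
  lazymatch type of T with Prop => fail | _ => clear x end end.
Ltac mlra := clear_foralls; clear_vars; lra.
Ltac mnra := clear_foralls; clear_vars; nra.


Section A.
Variable R : realType.

Lemma mvt_pos (f df : R -> R) (a b : R) : 0 < a -> a <= b ->
  (forall z, a <= z -> z <= b -> is_derive z 1 f (df z)) ->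
  exists2 c, a <= c <= b & f b - f a = df c * (b - a).
Proof.
move=> a0 ab hd.
have h1 : forall x, x \in `]a, b[ -> is_derive x 1 f (df x).
  by move=> z; rewrite in_itv /= => /andP[h1 h2]; apply: hd; apply: ltW.
have h2 : {within `[a, b], continuous f}.
  apply: (@derivable_within_continuous _ _ f `[a, b]) => z.
  rewrite in_itv /= => /andP[h1' h2'].
  by have := hd z h1' h2' => -[].
have [c cab ->] := @MVT_segment R f df a b ab h1 h2.
by exists c => //; move: cab; rewrite in_itv.
Qed.

Lemma deriv_G (q be ga z : R) : 0 < z ->
  is_derive z 1 (fun z => z `^ q + be * z - ga * z ^+ 2)
    (q * z `^ (q - 1) + be - 2 * ga * z).
Proof.
move=> z0.
have h1 : is_derive z 1 (fun x : R => x `^ q) (q * z `^ (q - 1)) by exact: is_derive1_powR.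
have h2 := is_deriveZ be (is_derive_id z (1:R)).
have h3 := is_deriveZ ga (is_deriveX 2 (is_derive_id z (1:R))).
have h := is_deriveB (is_deriveD h1 h2) h3.
match type of h with is_derive _ _ ?f _ =>
  have e : f = (fun z : R => z `^ q + be * z - ga * z ^+ 2) by apply/funext => x /= end.
rewrite e in h; apply: (is_derive_eq h).
rewrite /GRing.scale /= !mulr1 /=. ring.
Qed.

Lemma A1 (al x y : R) : 0 < al < 1 -> 0 < y -> y <= x -> x <= 1 ->
  al * (x - y) <= x `^ al - y `^ al.
Proof.
move=> /andP[al0 al1] y0 yx x1.
have [c /andP[yc cx] h] := @mvt_pos (fun z => z `^ al + (- al) * z - 0 * z ^+ 2)
   (fun z => al * z `^ (al - 1) + (- al) - 2 * 0 * z) y x y0 yx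
   (fun z yz zx => @deriv_G al (-al) 0 z (lt_le_trans y0 yz)).
have c0 : 0 < c by apply: lt_le_trans yc.
have : 1 <= c `^ (al - 1).
  rewrite -{1}(powRr0 c); apply: (@ger_powR _ c).
    by rewrite c0 (le_trans cx x1).
  by rewrite lerBlDr add0r ltW.
move=> hc.
have : 0 <= (al * c `^ (al - 1) - al) * (x - y).
  apply: mulr_ge0; last by rewrite subr_ge0.
  by rewrite subr_ge0 -{1}(mulr1 al) ler_pM2l.
move: h; rewrite !mulr0 !mul0r !subr0 => h.
lra.
Qed.

Lemma Breg (q x y : R) : 1 < q < 2 -> 0 <= x -> x <= 1 -> 0 < y -> y <= 1 ->
  (q * (q - 1) / 2) * (x - y) ^+ 2 <= x `^ q - y `^ q - q * y `^ (q - 1) * (x - y).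
Proof.
move=> /andP[q1 q2] x0 x1 y0 y1.
have q0 : 0 < q by apply: lt_trans q1.
have al0 : 0 < q - 1 by rewrite subr_gt0.
have al1 : q - 1 < 1 by rewrite ltrBlDr; lra.
rewrite le_eqVlt in x0; case/orP: x0 => [/eqP x0 | x0].
  rewrite -x0 powR0 ?gt_eqF // sub0r mulrN opprK.
  have e : q * y `^ (q - 1) * y = q * y `^ q.
    by rewrite -mulrA [y `^ _ * y]mulrC mulr_powRB1 // ltW.
  rewrite e.
  have : y ^+ 2 <= y `^ q.
    rewrite -powR_mulrn ?(ltW y0) //; apply: (@ger_powR _ y); first by rewrite y0 y1.
    by rewrite ltW.
  move=> hy.
  have h1 : 0 <= (q - 1) * (y `^ q - y ^+ 2) by apply: mulr_ge0; lra.
  have h2 : 0 <= (q - 1) * ((2 - q) * y ^+ 2).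
    by apply: mulr_ge0; [lra | apply: mulr_ge0; [lra | exact: sqr_ge0]].
  rewrite sqrrN; lra.
pose be := q * (q - 1) * y - q * y `^ (q - 1).
pose ga := q * (q - 1) / 2.
pose G := fun z : R => z `^ q + be * z - ga * z ^+ 2.
have eD : x `^ q - y `^ q - q * y `^ (q - 1) * (x - y) - (q * (q - 1) / 2) * (x - y) ^+ 2
   = G x - G y.
  by rewrite /G /be /ga /=; field.
rewrite -subr_ge0 eD.
have dG : forall a b, 0 < a -> a <= b -> exists2 c, a <= c <= b &
    G b - G a = (q * c `^ (q - 1) + be - 2 * ga * c) * (b - a).
  move=> a b a0 ab; apply: mvt_pos => // z az zb.
  exact: (@deriv_G q be ga z (lt_le_trans a0 az)).
have [yx|xy] := leP y x.
  have [c /andP[yc cx] ->] := dG y x y0 yx.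
  have := @A1 (q - 1) c y (introT andP (conj al0 al1)) y0 yc (le_trans cx x1).
  rewrite /be /ga => h.
  apply: mulr_ge0; last by rewrite subr_ge0.
  nra.
have [c /andP[xc cy] h] := dG x y x0 (ltW xy).
have := @A1 (q - 1) y c (introT andP (conj al0 al1)) (lt_le_trans x0 xc) cy y1.
rewrite /be /ga => h2.
have : (q * c `^ (q - 1) + be - 2 * ga * c) * (y - x) <= 0.
  apply: mulr_le0_ge0; last by rewrite subr_ge0 ltW.
  rewrite /be /ga; nra.
lra.
Qed.
End A.

Section B.
Variable R : realType.
Variable n : nat.

Lemma CS (c d : 'I_n -> R) : (forall i, 0 <= c i) ->
  (\sum_i c i * d i) ^+ 2 <= (\sum_i c i) * (\sum_i c i * d i ^+ 2).
Proof.
move=> c0.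
set S0 := \sum_i c i; set X := \sum_i c i * d i; set Y := \sum_i c i * d i ^+ 2.
have S00 : 0 <= S0 by apply: sumr_ge0.
rewrite le_eqVlt in S00; case/orP: S00 => [/eqP S00 | S0p].
  have hc : forall i, c i = 0.
    move=> i; have := (psumr_eq0P (P := predT) (fun i _ => c0 i)).
    by move=> /(_ (esym S00)) /(_ i isT).
  by rewrite /X /S0 !big1 ?mul0r ?expr0n //= => i _; rewrite hc mul0r.
have h : 0 <= \sum_i c i * (S0 * d i - X) ^+ 2.
  by apply: sumr_ge0 => i _; apply: mulr_ge0 => //; exact: sqr_ge0.
have e : \sum_i c i * (S0 * d i - X) ^+ 2 = S0 * (S0 * Y - X ^+ 2).
  have e1 : forall i, c i * (S0 * d i - X) ^+ 2 =
      S0 ^+ 2 * (c i * d i ^+ 2) - 2 * S0 * X * (c i * d i) + X ^+ 2 * c i.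
    by move=> i; ring.
  rewrite (eq_bigr _ (fun i _ => e1 i)) big_split /= sumrB -!mulr_sumr.
  rewrite -/X -/Y -/S0; ring.
rewrite e in h.
have : 0 <= S0 * Y - X ^+ 2 by rewrite -(pmulr_rge0 _ S0p).
mlra.
Qed.
End B.

Section C.
Variable R : realType.
Variable n : nat.
Variables (p b : R) (a c L : 'I_n -> R).

Definition FF (u : 'I_n -> R) := 2^-1 * (\sum_i u i * a i) + b / 4 * (\sum_i u i * c i) ^+ 2
   - p^-1 * (\sum_i (u i) `^ (p / 2) * L i).

Definition crit (u : 'I_n -> R) := forall i,
  L i * (u i) `^ (p / 2 - 1) = a i + b * c i * \sum_j u j * c j.

Lemma Fbound (p2 : 2 < p) (p4 : p < 4) (b0 : 0 < b) (hc : forall i, 0 <= c i)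
  (hL : forall i, 0 <= L i) (u us : 'I_n -> R) : crit us -> (forall i, 0 < us i <= 1) ->
  (forall i, 0 <= u i <= 1) ->
  FF u - FF us <= \sum_i (b / 4 * (\sum_j c j) * c i - (p / 2 - 1) / 4 * L i) * (u i - us i) ^+ 2.
Proof.
move=> cr hus hu.
have p0 : 0 < p by mlra.
set Ss := \sum_j us j * c j.
set X := \sum_i c i * (u i - us i).
have eS : \sum_j u j * c j = Ss + X.
  rewrite /Ss /X -big_split /=; apply: eq_bigr => i _; ring.
have eSs : Ss = \sum_j us j * c j by [].
have eX : X = \sum_i c i * (u i - us i) by [].
clearbody Ss X.
have per : forall i, 2^-1 * (u i - us i) * a i - p^-1 * ((u i) `^ (p/2) - (us i) `^ (p/2)) * L i
    <= - ((p / 2 - 1) / 4 * L i * (u i - us i) ^+ 2) - b / 2 * Ss * (c i * (u i - us i)).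
  move=> i.
  have /andP[us0 us1] := hus i; have /andP[u0 u1] := hu i.
  have q1 : 1 < p / 2 by rewrite ltr_pdivlMr //; mlra.
  have q2 : p / 2 < 2 by rewrite ltr_pdivrMr //; mlra.
  have B := @Breg R (p/2) (u i) (us i) (introT andP (conj q1 q2)) u0 u1 us0 us1.
  have Lp : 0 <= L i / p by apply: divr_ge0 => //; mlra.
  have B' := ler_wpM2l Lp B.
  have ea : a i = L i * (us i) `^ (p / 2 - 1) - b * c i * Ss by rewrite cr -eSs; ring.
  set Y := (u i) `^ (p/2) - (us i) `^ (p/2) in B' *.
  set Z := (us i) `^ (p / 2 - 1) in B' ea *.
  set d := u i - us i in B' *.
  have e1 : L i / p * (p / 2 * (p / 2 - 1) / 2 * d ^+ 2) = (p / 2 - 1) / 4 * L i * d ^+ 2.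
    by field; mlra.
  have e2 : L i / p * (u i `^ (p / 2) - us i `^ (p / 2) - p / 2 * Z * d)
      = L i / p * Y - 2^-1 * L i * Z * d.
    by rewrite /Y; field; mlra.
  have e3 : p^-1 * Y * L i = L i / p * Y by field; mlra.
  rewrite e1 e2 in B'; rewrite e3 ea.
  clearbody Y Z d.
  mlra.
have hsum : \sum_i (2^-1 * (u i - us i) * a i - p^-1 * ((u i) `^ (p/2) - (us i) `^ (p/2)) * L i)
    <= \sum_i (- ((p / 2 - 1) / 4 * L i * (u i - us i) ^+ 2) - b / 2 * Ss * (c i * (u i - us i))).
  by apply: ler_sum => i _; exact: per.
have eR1 : \sum_i (- ((p / 2 - 1) / 4 * L i * (u i - us i) ^+ 2) - b / 2 * Ss * (c i * (u i - us i)))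
   = - \sum_i ((p / 2 - 1) / 4 * L i * (u i - us i) ^+ 2) - b / 2 * Ss * X.
  by rewrite sumrB sumrN eX mulr_sumr.
rewrite eR1 in hsum.
have eF : FF u - FF us = \sum_i (2^-1 * (u i - us i) * a i
      - p^-1 * ((u i) `^ (p/2) - (us i) `^ (p/2)) * L i)
    + b / 4 * ((\sum_j u j * c j) ^+ 2 - Ss ^+ 2).
  rewrite /FF eSs.
  have e : forall i, 2^-1 * (u i - us i) * a i
      - p^-1 * ((u i) `^ (p/2) - (us i) `^ (p/2)) * L i =
      2^-1 * (u i * a i) - 2^-1 * (us i * a i)
      - (p^-1 * ((u i) `^ (p/2) * L i) - p^-1 * ((us i) `^ (p/2) * L i)) by move=> i; ring.
  rewrite (eq_bigr _ (fun i _ => e i)) !sumrB -!mulr_sumr; ring.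
rewrite eF eS.
have hCS := @CS R n c (fun i => u i - us i) hc.
rewrite -eX in hCS.
have eR : forall S0, \sum_i (b / 4 * S0 * c i - (p / 2 - 1) / 4 * L i) * (u i - us i) ^+ 2
   = b / 4 * (S0 * (\sum_i c i * (u i - us i) ^+ 2))
     - \sum_i ((p / 2 - 1) / 4 * L i * (u i - us i) ^+ 2).
  move=> S0; rewrite !mulr_sumr -sumrB; apply: eq_bigr => i _; ring.
rewrite eR.
have hb : b / 4 * X ^+ 2 <= b / 4 * ((\sum_j c j) * (\sum_i c i * (u i - us i) ^+ 2)).
  by apply: ler_wpM2l => //; mlra.
mlra.
Qed.
End C.

Section D.
Variable R : realType.
Variable n : nat.
Variables (p b : R) (a c L : 'I_n -> R).

Lemma Exist (p2 : 2 < p) (p4 : p < 4) (b0 : 0 < b) (hc : forall i, 0 <= c i)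
  (hL : forall i, 0 <= L i) (hmin : forall i, (4 - p) * L i < 2 * a i)
  (hle : forall i, a i + b * c i * (\sum_j c j) <= L i) :
  exists us : 'I_n -> R, @crit R n p b a c L us /\ forall i, 0 < us i <= 1.
Proof.
have S00 : 0 <= \sum_j c j by apply: sumr_ge0 => j _.
have a0 : forall i, 0 < a i.
  move=> i; have := hmin i; have := hL i => h1 h2.
  have : 0 <= (4 - p) * L i by apply: mulr_ge0 => //; mlra.
  mlra.
have L0 : forall i, 0 < L i.
  move=> i; have := hle i; have := a0 i.
  have : 0 <= b * c i * (\sum_j c j) by apply: mulr_ge0 => //; apply: mulr_ge0 => //; mlra.
  mlra.
have q1 : 0 < p / 2 - 1 by rewrite subr_gt0 ltr_pdivlMr //; mlra.
set e := (p / 2 - 1)^-1.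
have e0 : 0 <= e by rewrite /e invr_ge0 ltW.
have ee : e * (p / 2 - 1) = 1 by rewrite /e mulVf // gt_eqF.
have base0 : forall i S, 0 <= S -> 0 < (a i + b * c i * S) / L i.
  move=> i S S0; apply: divr_gt0 => //.
  have : 0 <= b * c i * S by apply: mulr_ge0 => //; apply: mulr_ge0 => //; mlra.
  have := a0 i; mlra.
pose h i S := ((a i + b * c i * S) / L i) `^ e.
have hmono : forall i S S', 0 <= S -> S <= S' -> h i S <= h i S'.
  move=> i S S' S0 SS'; rewrite /h.
  apply: (ge0_ler_powR e0); rewrite ?nnegrE.
  - exact: ltW (base0 i S S0).
  - exact: ltW (base0 i S' (le_trans S0 SS')).
  rewrite ler_pM2r ?invr_gt0 // lerD2l; apply: ler_wpM2l => //; apply: mulr_ge0 => //; mlra.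
have h1 : forall i, h i (\sum_j c j) <= 1.
  move=> i; rewrite /h; apply: (@le_trans _ _ ((1:R) `^ e)); last by rewrite powR1.
  apply: (ge0_ler_powR e0); rewrite ?nnegrE //.
  - exact: ltW (base0 i _ S00).
  by rewrite ler_pdivrMr // mul1r.
pose Psi S := \sum_i c i * h i S.
have Pmono : forall S S', 0 <= S -> S <= S' -> Psi S <= Psi S'.
  move=> S S' S0 SS'; apply: ler_sum => i _; apply: ler_wpM2l => //; exact: hmono.
have P0 : forall S, 0 <= Psi S.
  by move=> S; apply: sumr_ge0 => i _; apply: mulr_ge0 => //; exact: powR_ge0.
have PS0 : Psi (\sum_j c j) <= \sum_j c j.
  apply: ler_sum => i _; rewrite -{2}(mulr1 (c i)); apply: ler_wpM2l => //.
pose A := [set S : R | 0 <= S <= \sum_j c j /\ S <= Psi S].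
have A0 : A 0 by split; [rewrite lexx S00 | exact: P0].
have hs : has_sup A.
  split; first by exists 0.
  by exists (\sum_j c j) => S [/andP[_ ->]].
set Ss := sup A.
have Ss0 : 0 <= Ss by exact: sup_upper_bound.
have SsS0 : Ss <= \sum_j c j.
  by apply: ge_sup; [exists 0 | move=> S [/andP[_ ->]]].
have SsP : Ss <= Psi Ss.
  apply: ge_sup; first by exists 0.
  move=> S AS; have [/andP[S0 _] SP] := AS.
  apply: (le_trans SP); apply: Pmono => //.
  exact: (sup_upper_bound hs AS).
have PSsS0 : Psi Ss <= \sum_j c j by apply: le_trans (Pmono _ _ Ss0 SsS0) PS0.
have PA : A (Psi Ss).
  split; first by rewrite P0 PSsS0.
  by apply: Pmono.
have PSs : Psi Ss = Ss.
  by apply/eqP; rewrite eq_le SsP andbT; exact: sup_upper_bound.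
exists (fun i => h i Ss); split.
- move=> i /=.
  rewrite /h -powRrM mulrC ee powRr1; last exact: ltW (base0 i _ Ss0).
  have -> : \sum_j h j Ss * c j = Ss by rewrite -{2}PSs /Psi; apply: eq_bigr => j _; rewrite mulrC.
  by rewrite divfK // gt_eqF.
move=> i; rewrite powR_gt0 /=; last exact: base0.
exact: le_trans (hmono i _ _ Ss0 SsS0) (h1 i).
Qed.
End D.

Section E.
Variable R : realType.
Variable n : nat.
Variables (p b : R) (a c L : 'I_n -> R).

Definition eqnU (u : 'I_n -> R) (i : 'I_n) :=
  u i * a i + b * (u i * c i) ^+ 2 + b * (u i * c i) * (\sum_(j < n | j != i) u j * c j)
  = (u i) `^ (p / 2) * L i.

Lemma eqnU_crit (p2 : 2 < p) (u : 'I_n -> R) (hu : forall i, 0 < u i) i :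
  eqnU u i <-> L i * (u i) `^ (p / 2 - 1) = a i + b * c i * \sum_j u j * c j.
Proof.
have q0 : 0 < p / 2 by apply: divr_gt0 => //; exact: (lt_trans _ p2).
rewrite /eqnU [\sum_(j < n) u j * c j](bigD1 i) //=.
have e : (u i) `^ (p / 2) = u i * (u i) `^ (p / 2 - 1) by rewrite mulr_powRB1 // ltW.
rewrite e.
have u0 := hu i.
split => h.
  apply: (mulfI (lt0r_neq0 u0)).
  have -> : u i * (L i * u i `^ (p / 2 - 1)) = u i * u i `^ (p / 2 - 1) * L i by ring.
  by rewrite -h; ring.
have -> : u i * u i `^ (p / 2 - 1) * L i = u i * (L i * u i `^ (p / 2 - 1)) by ring.
by rewrite h; ring.
Qed.
End E.

Definition EE {R : realType} {n : nat} (p b : R) (a c L : 'I_n -> R) (t : 'I_n -> R) :=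
  2^-1 * (\sum_i t i ^+ 2 * a i) + b / 4 * (\sum_i t i ^+ 2 * c i) ^+ 2
   - p^-1 * (\sum_i t i `^ p * L i).

Lemma powR_sq {R : realType} (t p : R) : 0 <= t -> t `^ p = (t ^+ 2) `^ (p / 2).
Proof.
move=> t0; rewrite -powR_mulrn // -powRrM; congr (_ `^ _).
by rewrite mulrC divfK // pnatr_eq0.
Qed.

Lemma EE_FF {R : realType} {n : nat} (p b : R) (a c L : 'I_n -> R) (t : 'I_n -> R) :
  (forall i, 0 <= t i) -> EE p b a c L t = @FF R n p b a c L (fun i => t i ^+ 2).
Proof.
move=> t0; rewrite /EE /FF; congr (_ - _ * _).
by apply: eq_bigr => i _; rewrite powR_sq.
Qed.

Lemma AlgMain {R : realType} {n : nat} (p b : R) (a c L : 'I_n -> R)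
  (p2 : 2 < p) (p4 : p < 4) (b0 : 0 < b) (hc : forall i, 0 <= c i)
  (hL : forall i, 0 <= L i) (hmin : forall i, (4 - p) * L i < 2 * a i)
  (hle : forall i, a i + b * c i * (\sum_j c j) <= L i) :
  exists th : 'I_n -> R, [/\ (forall i, 0 < th i <= 1),
   (forall i, eqnU R n p b a c L (fun j => th j ^+ 2) i),
   (forall i, (4 - p) * (th i `^ p * L i) < 2 * (th i ^+ 2 * a i)),
   (forall t, (forall i, 0 < t i <= 1) ->
      (forall i, eqnU R n p b a c L (fun j => t j ^+ 2) i) -> t = th) &
   (forall t, (forall i, 0 <= t i <= 1) -> EE p b a c L t <= EE p b a c L th)].
Proof.
have [us [cr hus]] := @Exist R n p b a c L p2 p4 b0 hc hL hmin hle.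
have q0 : 0 < p / 2 - 1 by rewrite subr_gt0 ltr_pdivlMr //; mlra.
have kneg : forall i, b / 4 * (\sum_j c j) * c i - (p / 2 - 1) / 4 * L i < 0.
  move=> i; have := hle i; have := hmin i; have := hc i; have := hL i.
  have S00 : 0 <= \sum_j c j by apply: sumr_ge0.
  have : 0 <= b * c i * (\sum_j c j).
    by apply: mulr_ge0 => //; apply: mulr_ge0 => //; exact: ltW.
  move: S00 (\sum_j c j) => _ S; mlra.
pose th i := Num.sqrt (us i).
have thus : forall i, th i ^+ 2 = us i.
  by move=> i; rewrite /th sqr_sqrtr //; have /andP[/ltW ->] := hus i.
have eth : (fun j => th j ^+ 2) = us by apply/funext => j; rewrite thus.
have th0 : forall i, 0 <= th i by move=> i; exact: sqrtr_ge0.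
exists th; split.
- move=> i; have /andP[u0 u1] := hus i.
  rewrite /th sqrtr_gt0 u0 /=.
  have := thus i; have := th0 i; rewrite /th => h1 h2; mnra.
- move=> i; rewrite eth; apply/(@eqnU_crit R n p b a c L p2) => //.
  by move=> j; have /andP[] := hus j.
- move=> i; have /andP[u0 u1] := hus i.
  rewrite powR_sq // thus -mulr_powRB1 ?(ltW u0) //; last by apply: divr_gt0 => //; mlra.
  have h1 : us i `^ (p / 2 - 1) <= 1.
    apply: (@le_trans _ _ ((1:R) `^ (p / 2 - 1))); last by rewrite powR1.
    by apply: ge0_ler_powR; rewrite ?nnegrE ?(ltW u0) // ltW.
  have h2 : 0 <= us i `^ (p / 2 - 1) by exact: powR_ge0.
  have h3 := hmin i; have h4 := hL i.
  have h5 : (4 - p) * (us i `^ (p / 2 - 1) * L i) <= (4 - p) * L i.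
    apply: ler_wpM2l; first by mlra.
    by rewrite -{2}(mul1r (L i)); apply: ler_wpM2r.
  have : (4 - p) * (us i * us i `^ (p / 2 - 1) * L i) = us i * ((4 - p) * (us i `^ (p / 2 - 1) * L i)) by ring.
  move=> ->; rewrite [2 * _]mulrA [2 * us i]mulrC -mulrA.
  by rewrite ltr_pM2l //; apply: le_lt_trans h5 h3.
- move=> t ht he.
  pose u i := t i ^+ 2.
  have u0 : forall i, 0 < u i by move=> i; have /andP[t0 _] := ht i; rewrite /u exprn_gt0.
  have u1 : forall i, 0 < u i <= 1.
    move=> i; have /andP[t0 t1] := ht i; rewrite u0 /u /=.
    by rewrite expr_le1 // ltW.
  have cru : crit R n p b a c L u by move=> i; apply/(@eqnU_crit R n p b a c L p2) => //; exact: he.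
  have hu1 : forall i, 0 <= u i <= 1 by move=> i; have /andP[h1 h2] := u1 i; rewrite h2 ltW.
  have hus1 : forall i, 0 <= us i <= 1 by move=> i; have /andP[h1 h2] := hus i; rewrite h2 ltW.
  have B1 := @Fbound R n p b a c L p2 p4 b0 hc hL u us cr hus hu1.
  have B2 := @Fbound R n p b a c L p2 p4 b0 hc hL us u cru u1 hus1.
  have eQ : \sum_i (b / 4 * (\sum_j c j) * c i - (p / 2 - 1) / 4 * L i) * (us i - u i) ^+ 2
     = \sum_i (b / 4 * (\sum_j c j) * c i - (p / 2 - 1) / 4 * L i) * (u i - us i) ^+ 2.
    by apply: eq_bigr => i _; congr (_ * _); rewrite -sqrrN opprB.
  rewrite eQ in B2.
  have NN : forall i, 0 <= - ((b / 4 * (\sum_j c j) * c i - (p / 2 - 1) / 4 * L i) * (u i - us i) ^+ 2).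
    by move=> i; rewrite -mulNr; apply: mulr_ge0; [rewrite oppr_ge0 ltW | exact: sqr_ge0].
  have Q0 : 0 <= \sum_i - ((b / 4 * (\sum_j c j) * c i - (p / 2 - 1) / 4 * L i) * (u i - us i) ^+ 2).
    by apply: sumr_ge0 => i _; exact: NN.
  have Q1 : \sum_i - ((b / 4 * (\sum_j c j) * c i - (p / 2 - 1) / 4 * L i) * (u i - us i) ^+ 2) = 0.
    apply/eqP; rewrite eq_le Q0 andbT sumrN oppr_le0.
    move: B1 B2; move: (\sum_i _) => Q; move: (FF _ _ _ _ _ _ _ u) (FF _ _ _ _ _ _ _ us) => x y.
    mlra.
  have Z := psumr_eq0P (fun i (_ : predT i) => NN i) Q1.
  apply/funext => j.
  have := Z j isT; move/eqP; rewrite oppr_eq0 mulf_eq0 (lt_eqF (kneg j)) /= sqrf_eq0 subr_eq0 => /eqP ej.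
  have /andP[tj0 _] := ht j.
  by rewrite /th -ej /u sqrtr_sqr gtr0_norm.
- move=> t ht.
  have t0 : forall i, 0 <= t i by move=> i; have /andP[] := ht i.
  rewrite !EE_FF // eth.
  pose u i := t i ^+ 2.
  have hu1 : forall i, 0 <= u i <= 1.
    move=> i; have /andP[h1 h2] := ht i; rewrite /u sqr_ge0 /=.
    by rewrite expr_le1.
  have B1 := @Fbound R n p b a c L p2 p4 b0 hc hL u us cr hus hu1.
  have : \sum_i (b / 4 * (\sum_j c j) * c i - (p / 2 - 1) / 4 * L i) * (u i - us i) ^+ 2 <= 0.
    apply: sumr_le0 => i _; apply: mulr_le0_ge0; [exact: ltW | exact: sqr_ge0].
  by move=> hQ; rewrite -subr_le0; exact: le_trans B1 hQ.
Qed.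

Notation mu := (@lebesgue_measure _).

Lemma shell_itv (R : realType) k (r : nat -> R) i :
  shell k r i = [set` Interval (BRight (lo r i))
     (if (i < k)%N then BLeft (r i.+1) else BInfty _ false)].
Proof.
apply/seteqP; split => s /=; rewrite /shell /= in_itv /=.
  by case: ltnP => h [h1 h2] /=; rewrite h1 //= h2.
by case: ltnP => h /andP[h1 h2]; split => // _.
Qed.

Lemma shell_meas (R : realType) k (r : nat -> R) i : measurable (shell k r i).
Proof. by rewrite shell_itv; exact: measurable_itv. Qed.

Lemma fineZ (R : realType) (k : R) (x : \bar R) : 0 <= k -> fine (k%:E * x)%E = k * fine x.
Proof.
move=> k0; case: x => [x| |] /=; first by [].
  rewrite le_eqVlt in k0; case/orP: k0 => [/eqP <-|k0]; first by rewrite mul0e /= mul0r.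
  by rewrite mulry gtr0_sg // mul1e /= mulr0.
rewrite le_eqVlt in k0; case/orP: k0 => [/eqP <-|k0]; first by rewrite mul0e /= mul0r.
by rewrite mulrNy gtr0_sg // mul1e /= mulr0.
Qed.

Lemma RintZ (R : realType) (D : set R) (f : R -> R) (k : R) : measurable D ->
  measurable_fun D f -> (forall x, D x -> 0 <= f x) -> 0 <= k ->
  Rintegral mu D (fun x => k * f x) = k * Rintegral mu D f.
Proof.
move=> mD mf f0 k0; rewrite /Rintegral.
under eq_integral do rewrite EFinM.
rewrite ge0_integralZl //; first exact: fineZ.
by apply/measurable_EFinP.
Qed.

Definition sa (R : realType) (r : nat -> R) i (n : nat) := lo r i + (n.+1%:R)^-1.
Definition sb (R : realType) k (r : nat -> R) i (n : nat) :=
  if (i < k)%N then r i.+1 - (n.+1%:R)^-1 else lo r i + n.+1%:R.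

Lemma shell_cover (R : realType) k (r : nat -> R) i :
  (forall n, `[@sa R r i n, @sb R k r i n]%classic `<=` shell k r i) /\
  shell k r i = \bigcup_n `[@sa R r i n, @sb R k r i n]%classic.
Proof.
pose a := @sa R r i; pose b := @sb R k r i.
rewrite -/a -/b.
have sub : forall n, `[a n, b n]%classic `<=` shell k r i.
  move=> n s /=; rewrite in_itv /= => /andP[h1 h2]; split.
    apply: lt_le_trans h1; rewrite /a /sa ltrDl invr_gt0; exact: ltr0Sn.
  move=> ik; have hb : b n < r i.+1 by rewrite /b /sb ik gtrDl oppr_lt0 invr_gt0; exact: ltr0Sn.
  exact: (le_lt_trans h2 hb).
split => //; apply/seteqP; split => s; last by move=> [n _]; exact: sub.
move=> [h1 h2].
pose x := (s - lo r i)^-1 + (if (i < k)%N then (r i.+1 - s)^-1 else 0) + (s - lo r i).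
have d0 : 0 < s - lo r i by rewrite subr_gt0.
have e0 : (i < k)%N -> 0 < r i.+1 - s by move=> ik; rewrite subr_gt0 h2.
have x0 : 0 <= x.
  rewrite /x; apply: addr_ge0; last exact: ltW.
  apply: addr_ge0; first by rewrite invr_ge0 ltW.
  by case: ifP => // ik; rewrite invr_ge0 ltW // e0.
have := archi_boundP x0; set N := Num.Def.archi_bound x => hN.
have hN1 : x < N.+1%:R by apply: lt_le_trans hN _; rewrite ler_nat.
have Np : 0 < (N.+1%:R : R) by exact: ltr0Sn.
exists N => //=; rewrite in_itv /=; apply/andP; split.
  rewrite /a /sa -lerBrDl; apply: ltW; rewrite -invf_plt ?posrE //.
  apply: le_lt_trans hN1; rewrite /x -addrA lerDl; apply: addr_ge0; last exact: ltW.
  by case: ifP => // ik; rewrite invr_ge0 ltW // e0.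
rewrite /b /sb; case: ifP => ik.
  rewrite lerBrDl -lerBrDr; apply: ltW; rewrite -invf_plt ?posrE ?e0 //.
  apply: le_lt_trans hN1; rewrite /x ik -addrA addrCA lerDl; apply: addr_ge0.
    by rewrite invr_ge0 ltW.
  exact: ltW.
rewrite -lerBlDl; apply: ltW; apply: le_lt_trans hN1.
by rewrite /x ik addr0 lerDr invr_ge0 ltW.
Qed.

Lemma radH_meas (R : realType) (V : R -> R) k (r : nat -> R) i (w g : R -> R) :
  radH V k r i w g ->
  measurable_fun (shell k r i) g /\ measurable_fun (shell k r i) w.
Proof.
move=> [h0 hint _ _ _].
have [sub cov] := @shell_cover R k r i.
set a := @sa R r i in sub cov.
set b := @sb R k r i in sub cov.
have mE : forall n, measurable (`[a n, b n]%classic : set R) by move=> n; exact: measurable_itv.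
have key : forall n, measurable_fun `[a n, b n] g /\ measurable_fun `[a n, b n] w.
  move=> n.
  have [ab|ba] := leP (a n) (b n); last first.
    rewrite set_itv_ge; last by rewrite bnd_simp -ltNge.
    by split; exact: measurable_fun_set0.
  have sa : shell k r i (a n).
    by apply: (sub n); rewrite /= in_itv /=; apply/andP; split.
  have sb : shell k r i (b n).
    by apply: (sub n); rewrite /= in_itv /=; apply/andP; split.
  have [ig _] := hint _ _ sa sb ab.
  have mg : measurable_fun `[a n, b n] g.
    by apply/measurable_EFinP; have /integrableP[] := ig.
  split => //.
  have mP : measurable_fun `[a n, b n]
      (fun x => w (a n) + parameterized_integral mu (a n) x g).
    apply: measurable_funD; first exact: measurable_cst.
    apply: subspace_continuous_measurable_fun; first exact: mE.
    exact: parameterized_integral_continuous.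
  apply: eq_measurable_fun mP => x; rewrite inE /= in_itv /= => /andP[x1 x2].
  have sx : shell k r i x.
    by apply: (sub n); rewrite /= in_itv /=; apply/andP; split.
  have [_ e] := hint _ _ sa sx x1.
  by rewrite /parameterized_integral -e; ring.
rewrite cov; split; apply/(measurable_fun_bigcup _ mE) => n; by have [] := key n.
Qed.

Lemma gradsq_ge0 (R : realType) k (r : nat -> R) i (g : R -> R) : 0 <= gradsq k r i g.
Proof.
rewrite /gradsq; apply: mulr_ge0; first by apply: mulr_ge0 => //; exact: pi_ge0.
by apply: Rintegral_ge0 => x _; apply: mulr_ge0; exact: sqr_ge0.
Qed.

Lemma Lpp_ge0 (R : realType) (p : R) k (r : nat -> R) i (w : R -> R) : 0 <= Lpp p k r i w.
Proof.
rewrite /Lpp; apply: mulr_ge0; first by apply: mulr_ge0 => //; exact: pi_ge0.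
by apply: Rintegral_ge0 => x _; apply: mulr_ge0; [exact: powR_ge0 | exact: sqr_ge0].
Qed.

Lemma Lpp_nz (R : realType) (p : R) k (r : nat -> R) i (w : R -> R) : p != 0 ->
  0 < Lpp p k r i w -> exists s, w s != 0.
Proof.
move=> p0 hL; case: (pselect (exists s, w s != 0)) => // hw.
have w0 : forall s, w s = 0.
  by move=> s; apply/eqP; apply: contrapT => h; apply: hw; exists s; apply/negP.
move: hL; rewrite /Lpp /Rintegral integral0_eq ?mulr0 ?ltxx // => x _.
by rewrite w0 normr0 powR0 // mul0r.
Qed.

Lemma gradsq_scale (R : realType) (V : R -> R) k (r : nat -> R) i (w g : R -> R) (t : R) :
  radH V k r i w g -> gradsq k r i (t *: g) = t ^+ 2 * gradsq k r i g.
Proof.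
move=> hr; have [mg _] := @radH_meas R V k r i w g hr.
rewrite /gradsq.
have -> : Rintegral mu (shell k r i) (fun s => (t *: g) s ^+ 2 * s ^+ 2)
   = Rintegral mu (shell k r i) (fun s => t ^+ 2 * (g s ^+ 2 * s ^+ 2)).
  by apply: eq_Rintegral => s _; change ((t *: g) s) with (t * g s); ring.
rewrite RintZ //; first ring.
- exact: shell_meas.
- apply: measurable_funM; first exact: measurable_funX.
  exact: measurable_funX.
- by move=> s _; apply: mulr_ge0; exact: sqr_ge0.
exact: sqr_ge0.
Qed.

Lemma Lpp_scale (R : realType) (V : R -> R) (p : R) k (r : nat -> R) i (w g : R -> R) (t : R) :
  radH V k r i w g -> 0 <= t -> Lpp p k r i (t *: w) = t `^ p * Lpp p k r i w.
Proof.
move=> hr t0; have [_ mw] := @radH_meas R V k r i w g hr.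
rewrite /Lpp.
have -> : Rintegral mu (shell k r i) (fun s => `|(t *: w) s| `^ p * s ^+ 2)
   = Rintegral mu (shell k r i) (fun s => t `^ p * (`|w s| `^ p * s ^+ 2)).
  apply: eq_Rintegral => s _; change ((t *: w) s) with (t * w s).
  by rewrite normrM (ger0_norm t0) powRM // mulrA.
rewrite RintZ //; first ring.
- exact: shell_meas.
- apply: measurable_funM; last exact: measurable_funX.
  apply: (measurableT_comp (measurable_powR p)).
  exact: (measurableT_comp (@normr_measurable R _)).
- by move=> s _; apply: mulr_ge0; [exact: powR_ge0 | exact: sqr_ge0].
exact: powR_ge0.
Qed.

Lemma normsq_scale (R : realType) (V : R -> R) k (r : nat -> R) i (w g : R -> R) (t : R) :
  radH V k r i w g -> normsq V k r i (t *: w) (t *: g) = t ^+ 2 * normsq V k r i w g.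
Proof.
move=> [_ _ hi _ _].
rewrite /normsq.
have -> : Rintegral mu (shell k r i) (fun s => ((t *: g) s ^+ 2 + V s * (t *: w) s ^+ 2) * s ^+ 2)
   = Rintegral mu (shell k r i) (fun s => t ^+ 2 * ((g s ^+ 2 + V s * w s ^+ 2) * s ^+ 2)).
  by apply: eq_Rintegral => s _; change ((t *: g) s) with (t * g s);
    change ((t *: w) s) with (t * w s); ring.
rewrite RintegralZl //; first ring.
exact: shell_meas.
Qed.

Lemma radH_scale (R : realType) (V : R -> R) k (r : nat -> R) i (w g : R -> R) (t : R) :
  radH V k r i w g -> radH V k r i (t *: w) (t *: g).
Proof.
move=> [h0 hint hi hl hr].
split.
- move=> s hs; have [e1 e2] := h0 s hs; split.
    by change (t * w s = 0); rewrite e1 mulr0.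
  by change (t * g s = 0); rewrite e2 mulr0.
- move=> s u hs hu su; have [ig e] := hint s u hs hu su.
  have mI : measurable (`[s, u]%classic : set R) by exact: measurable_itv.
  split.
    have I := integrableZl _ t ig.
    apply: (eq_integrable _ _ _ _ (I _)) => [|x _ /=|]; last exact: measurable_itv.
      exact: measurable_itv.
    by rewrite EFinM.
  rewrite /= -mulrBr e -RintegralZl //.
- have I := integrableZl _ (t ^+ 2) hi.
  apply: (eq_integrable _ _ _ _ (I _)) => [|x _ /=|]; last exact: shell_meas.
    exact: shell_meas.
  rewrite -EFinM; congr EFin.
  change ((t *: g) x) with (t * g x); change ((t *: w) x) with (t * w x); ring.
- move=> ik; rewrite -(mulr0 t); exact: cvgMr (hl ik).
move=> ik; rewrite -(mulr0 t); exact: cvgMr (hr ik).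
Qed.

Theorem lemma2p3 (R : realType) (p b : R) (V : R -> R) (k : nat) (r : nat -> R)
  (w g : 'I_k.+1 -> R -> R) :
  2 < p -> p < 4 -> 0 < b ->
  {within `[0, +oo[, continuous V} ->
  0 < inf (V @` `[0, +oo[) ->
  radii_ok k r ->
  (forall i : 'I_k.+1, radH V k r i (w i) (g i)) ->
  (forall i : 'I_k.+1,
     (4 - p) * Lpp p k r i (w i) < 2 * normsq V k r i (w i) (g i)) ->
  (forall i : 'I_k.+1,
     normsq V k r i (w i) (g i) + b * (gradsq k r i (g i)) ^+ 2
       + b * gradsq k r i (g i) * (\sum_(j < k.+1 | j != i) gradsq k r j (g j))
       <= Lpp p k r i (w i)) ->
  exists th : 'I_k.+1 -> R,
    [/\ (forall i, 0 < th i <= 1),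
        inNminus V b p r (fun i => th i *: w i) (fun i => th i *: g i),
        (forall t : 'I_k.+1 -> R, (forall i, 0 < t i <= 1) ->
           inNminus V b p r (fun i => t i *: w i) (fun i => t i *: g i) ->
           t = th) &
        (forall t : 'I_k.+1 -> R, (forall i, 0 <= t i <= 1) ->
           Eb V b p r (fun i => t i *: w i) (fun i => t i *: g i)
           <= Eb V b p r (fun i => th i *: w i) (fun i => th i *: g i))].
Proof.
move=> p2 p4 b0 _ _ _ hR hmin hle.
pose a (i : 'I_k.+1) := normsq V k r i (w i) (g i).
pose c (i : 'I_k.+1) := gradsq k r i (g i).
pose L (i : 'I_k.+1) := Lpp p k r i (w i).
have hc : forall i, 0 <= c i by move=> i; exact: gradsq_ge0.
have hL : forall i, 0 <= L i by move=> i; exact: Lpp_ge0.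
have hle' : forall i, a i + b * c i * (\sum_j c j) <= L i.
  move=> i; have := hle i.
  by rewrite [\sum_j c j](bigD1 i) //= /a /c /L; congr (_ <= _); ring.
have [th [th01 theq thmin thuniq thmax]] := @AlgMain R k.+1 p b a c L p2 p4 b0 hc hL hmin hle'.
have a0 : forall i, 0 < a i.
  move=> i; have := hmin i; have := hL i => h1 h2.
  have : 0 <= (4 - p) * L i by apply: mulr_ge0 => //; mlra.
  rewrite -/(L i) -/(a i) in h2; mlra.
have L0 : forall i, 0 < L i.
  move=> i; have := hle' i; have := a0 i; have := hc i => h1 h2 h3.
  have : 0 <= b * c i * (\sum_j c j).
    by apply: mulr_ge0; [apply: mulr_ge0 => //; exact: ltW | exact: sumr_ge0].
  mlra.
have p0 : p != 0 by apply: lt0r_neq0; mlra.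
have NS : forall (i : 'I_k.+1) s, normsq V k r i (s *: w i) (s *: g i) = s ^+ 2 * a i :=
  fun i s => @normsq_scale R V k r i (w i) (g i) s (hR i).
have GS : forall (i : 'I_k.+1) s, gradsq k r i (s *: g i) = s ^+ 2 * c i :=
  fun i s => @gradsq_scale R V k r i (w i) (g i) s (hR i).
have LS : forall (i : 'I_k.+1) s, 0 <= s -> Lpp p k r i (s *: w i) = s `^ p * L i :=
  fun i s hs => @Lpp_scale R V p k r i (w i) (g i) s (hR i) hs.
have eqtr : forall t : 'I_k.+1 -> R, (forall i, 0 <= t i) -> forall i : 'I_k.+1,
    (normsq V k r i (t i *: w i) (t i *: g i) + b * (gradsq k r i (t i *: g i)) ^+ 2
     + b * gradsq k r i (t i *: g i) * (\sum_(j < k.+1 | j != i) gradsq k r j (t j *: g j))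
     = Lpp p k r i (t i *: w i)) <-> eqnU R k.+1 p b a c L (fun j => t j ^+ 2) i.
  move=> t t0 i.
  rewrite NS GS (LS _ _ (t0 i)).
  rewrite (eq_bigr (fun j => t j ^+ 2 * c j)); last by move=> j _; rewrite GS.
  by rewrite /eqnU -powR_sq.
have Etr : forall t : 'I_k.+1 -> R, (forall i, 0 <= t i) ->
    Eb V b p r (fun i => t i *: w i) (fun i => t i *: g i) = EE p b a c L t.
  move=> t t0; rewrite /Eb /EE.
  congr (_ * _ + _ * _ ^+ 2 - _ * _); apply: eq_bigr => i _.
  - exact: NS.
  - exact: GS.
  exact: LS.
have th0 : forall i, 0 <= th i by move=> i; have /andP[/ltW] := th01 i.
exists th; split => //.
- move=> i; split.
  + exact: radH_scale.
  + have [s hs] := @Lpp_nz R p k r i (w i) p0 (L0 i).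
    exists s; change (th i * w i s != 0); rewrite mulf_neq0 //.
    by have /andP[/lt0r_neq0] := th01 i.
  + by apply/(eqtr th th0).
  + rewrite NS LS //; exact: thmin.
- move=> t ht hN.
  have t0 : forall i, 0 <= t i by move=> i; have /andP[/ltW] := ht i.
  apply: thuniq => // i.
  have [_ _ he _] := hN i.
  by apply/(eqtr t t0).
move=> t ht.
have t0 : forall i, 0 <= t i by move=> i; have /andP[] := ht i.
rewrite !Etr //; exact: thmax.
Qed.
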